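(* Let $d\geq 10$ and let $g\in C^\infty([0,\infty))$ solve $$g''+\left(\frac{d-3}{y}-\frac{y}{2}\right)g'-\frac{d-2}{y^2}\,g(g-1)(g-2)=0\quad (y>0)$$ with $g(0)=g'(0)=0$ and $g''(0)=a>0$. Let $h(y)=y^3g'(y)$. Then $h'(y)>0$ for all $y>0$, and $\lim_{y\to\infty}h(y)=+\infty$. *)

(* Defs.v *)
From Stdlib Require Import Reals Lra.
Open Scope R_scope.

Definition right_deriv (f : R -> R) (x l : R) : Prop :=
  forall eps : R, 0 < eps -> exists delta : R, 0 < delta /\
    forall t : R, 0 < t < delta -> Rabs ((f (x + t) - f x) / t - l) < eps.

(* [smooth_on_nonneg f D]: f is C^infinity on [0, oo), with D n = f^(n) on
   [0, oo): D 0 = f there, each D n is differentiable at every x > 0 with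
   derivative D (n+1) x, and has right derivative D (n+1) 0 at 0.
   (Values of f, D n at negative arguments are irrelevant.) *)
Definition smooth_on_nonneg (f : R -> R) (D : nat -> R -> R) : Prop :=
  (forall x : R, 0 <= x -> D 0%nat x = f x) /\
  (forall (n : nat) (x : R), 0 < x -> derivable_pt_lim (D n) x (D (S n) x)) /\
  (forall n : nat, right_deriv (D n) 0 (D (S n) 0)).

(* Main.v *)
Require Import Defs.
From Stdlib Require Import Reals Lra Lia.
Open Scope R_scope.

Lemma dl_ext f x l l' : derivable_pt_lim f x l -> l = l' -> derivable_pt_lim f x l'.
Proof. intros H ->; exact H. Qed.
Lemma dl_mul f g x lf lg : derivable_pt_lim f x lf -> derivable_pt_lim g x lg ->
  derivable_pt_lim (fun y => f y * g y) x (lf * g x + f x * lg).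
Proof. intros; apply (derivable_pt_lim_mult f g x lf lg); auto. Qed.
Lemma dl_add f g x lf lg : derivable_pt_lim f x lf -> derivable_pt_lim g x lg ->
  derivable_pt_lim (fun y => f y + g y) x (lf + lg).
Proof. intros; apply (derivable_pt_lim_plus f g x lf lg); auto. Qed.
Lemma dl_sub f g x lf lg : derivable_pt_lim f x lf -> derivable_pt_lim g x lg ->
  derivable_pt_lim (fun y => f y - g y) x (lf - lg).
Proof. intros; apply (derivable_pt_lim_minus f g x lf lg); auto. Qed.
Lemma dl_opp f x lf : derivable_pt_lim f x lf ->
  derivable_pt_lim (fun y => - f y) x (- lf).
Proof. intros; apply (derivable_pt_lim_opp f x lf); auto. Qed.
Lemma dl_const c x : derivable_pt_lim (fun _ => c) x 0.
Proof. apply derivable_pt_lim_const. Qed.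
Lemma dl_id x : derivable_pt_lim (fun y => y) x 1.
Proof. apply derivable_pt_lim_id. Qed.
Lemma dl_pow k x : derivable_pt_lim (fun y => y ^ k) x (INR k * x ^ Nat.pred k).
Proof. apply derivable_pt_lim_pow. Qed.
Lemma dl_exp f x lf : derivable_pt_lim f x lf ->
  derivable_pt_lim (fun y => exp (f y)) x (exp (f x) * lf).
Proof. intros H. apply (derivable_pt_lim_comp f exp x lf (exp (f x))); auto.
  apply derivable_pt_lim_exp. Qed.
Lemma dl_powf f k x lf : derivable_pt_lim f x lf ->
  derivable_pt_lim (fun y => f y ^ k) x (INR k * f x ^ Nat.pred k * lf).
Proof. intros H. apply (derivable_pt_lim_comp f (fun z => z ^ k) x lf); auto.
  apply derivable_pt_lim_pow. Qed.

Ltac dtac H1 H2 := repeat first [ apply dl_exp | apply dl_add | apply dl_sub | apply dl_opp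
   | apply dl_mul | apply dl_pow | apply dl_id | apply dl_const | apply H1 | apply H2 ].

Definition fW (n : R) (G p : R->R) y := (6 - n + y^2 * / 2) * y^2 * p y + (n - 2) * y * (G y * (G y - 1) * (G y - 2)).
Definition fE (m : nat) y := y^m * exp (- (y^2 * / 4)).
Definition fC (n:R) (G:R->R) y := (2*n - 12 + (n-2)*(3 * G y ^2 - 6 * G y + 2)) / y^2.
Definition fH (p : R->R) y := y^3 * p y.
Definition fF n m G p y := fE m y * fW n G p y.

Lemma W_deriv n G p q y : 0 < y -> derivable_pt_lim G y (p y) -> derivable_pt_lim p y (q y) ->
  q y + ((n-3)/y - y/2)*p y - (n-2)/y^2 * (G y*(G y-1)*(G y-2)) = 0 ->
  derivable_pt_lim (fW n G p) y ((7 - n + y^2/2)/y * fW n G p y + fC n G y * fH p y).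
Proof.
  intros Hy HG Hp Hode. unfold fW. eapply dl_ext. { dtac HG Hp. }
  assert (Hq : q y = - ((n-3)/y - y/2)*p y + (n-2)/y^2 * (G y*(G y-1)*(G y-2))) by lra.
  rewrite Hq. unfold fC, fH. simpl. field. lra.
Qed.

Lemma H_deriv n G p q y : 0 < y -> derivable_pt_lim p y (q y) ->
  q y + ((n-3)/y - y/2)*p y - (n-2)/y^2 * (G y*(G y-1)*(G y-2)) = 0 ->
  derivable_pt_lim (fH p) y (fW n G p y).
Proof.
  intros Hy Hp Hode. unfold fH. eapply dl_ext. { dtac Hp Hp. }
  assert (Hq : q y = - ((n-3)/y - y/2)*p y + (n-2)/y^2 * (G y*(G y-1)*(G y-2))) by lra.
  rewrite Hq. unfold fW. simpl. field. lra.
Qed.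

Lemma F_deriv n m G p q y : 0 < y -> INR m = n - 7 -> (1 <= m)%nat ->
  derivable_pt_lim G y (p y) -> derivable_pt_lim p y (q y) ->
  q y + ((n-3)/y - y/2)*p y - (n-2)/y^2 * (G y*(G y-1)*(G y-2)) = 0 ->
  derivable_pt_lim (fF n m G p) y (fE m y * fC n G y * fH p y).
Proof.
  intros Hy Hm Hm1 HG Hp Hode. unfold fF.
  eapply dl_ext. { apply dl_mul. unfold fE. dtac HG Hp. apply W_deriv with (q := q); auto. }
  destruct m as [|k]; [lia|]. unfold fE. simpl Nat.pred. rewrite Hm.
  replace (y ^ S k) with (y * y^k) by (simpl; ring). simpl. field. lra.
Qed.

Lemma dl_cont f x l : derivable_pt_lim f x l -> continuity_pt f x.
Proof. intros H. apply derivable_continuous_pt. exists l. exact H. Qed.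

Lemma cont_pos f x : continuity_pt f x -> 0 < f x ->
  exists al, 0 < al /\ forall z, Rabs (z - x) < al -> 0 < f z.
Proof.
  intros Hc Hf. destruct (Hc (f x) Hf) as [al [Hal H]].
  exists al; split; auto. intros z Hz.
  destruct (Req_dec z x) as [->|Hne]; auto.
  assert (Rabs (f z - f x) < f x).
  { apply (H z). split; [split; [exact I| auto] | exact Hz]. }
  apply Rabs_def2 in H0. lra.
Qed.

Lemma propagate (W H F E K : R -> R) (eps : R) :
  0 < eps ->
  (forall y, 0 < y -> derivable_pt_lim H y (W y)) ->
  (forall y, 0 < y -> continuity_pt W y) ->
  (forall y, 0 < y -> derivable_pt_lim F y (K y * H y)) ->
  (forall y, 0 < y -> 0 <= K y) ->
  (forall y, 0 < y -> F y = E y * W y /\ 0 < E y) ->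
  0 < W eps -> 0 < H eps ->
  forall z, eps <= z -> 0 < W z.
Proof.
  intros Heps HH HW HF HK HE HWe HHe z Hz.
  destruct (Rlt_or_le 0 (W z)) as [|Wz]; auto. exfalso.
  assert (Hz' : eps < z). { destruct Hz as [|<-]; auto. lra. }
  set (L := fun t => eps <= t <= z /\ forall s, eps <= s <= t -> 0 < W s).
  assert (Hb : bound L). { exists z. intros t [[_ ?] _]. auto. }
  assert (Hne : exists x, L x). { exists eps. split; [lra|]. intros s Hs. replace s with eps by lra. auto. }
  destruct (completeness L Hb Hne) as [t0 [Hub Hlub]].
  assert (Ht0a : eps <= t0). { apply Hub. split; [lra|]. intros s Hs. replace s with eps by lra. auto. }
  assert (Ht0b : t0 <= z). { apply Hlub. intros t [[_ ?] _]. auto. }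
  assert (Ha : forall s, eps <= s < t0 -> 0 < W s).
  { intros s Hs. destruct (Rlt_or_le 0 (W s)) as [|Ws]; auto. exfalso.
    assert (t0 <= s); [|lra]. apply Hlub. intros t [Ht Ht'].
    destruct (Rle_or_lt t s); auto. assert (0 < W s) by (apply Ht'; lra). lra. }
  assert (Hb0 : W t0 <= 0).
  { destruct (Rlt_or_le 0 (W t0)) as [Wt|]; auto. exfalso.
    destruct (Req_dec t0 z) as [->|Hneq]; [lra|].
    destruct (cont_pos W t0 (HW t0 ltac:(lra)) Wt) as [al [Hal Hc]].
    set (t1 := t0 + Rmin (al/2) (z - t0)).
    assert (Hm1 : 0 < Rmin (al/2) (z - t0)) by (apply Rmin_glb_lt; lra).
    assert (Hm2 : Rmin (al/2) (z - t0) <= al/2) by apply Rmin_l.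
    assert (Hm3 : Rmin (al/2) (z - t0) <= z - t0) by apply Rmin_r.
    assert (L t1).
    { split; [unfold t1; lra|]. intros s Hs.
      destruct (Rlt_or_le s t0); [apply Ha; lra|]. apply Hc.
      unfold t1 in Hs. rewrite Rabs_right; lra. }
    assert (t1 <= t0) by (apply Hub; auto). unfold t1 in *. lra. }
  assert (Ht0 : eps < t0). { destruct Ht0a as [|<-]; auto. lra. }
  destruct (MVT_cor2 F (fun y => K y * H y) eps t0 Ht0) as [c [Hc1 Hc2]].
  { intros c Hc. apply HF. lra. }
  assert (Hhc : 0 < H c).
  { destruct (MVT_cor2 H W eps c ltac:(lra)) as [c' [Hc'1 Hc'2]].
    { intros c0 Hc0. apply HH. lra. }
    assert (0 < W c') by (apply Ha; lra).
    assert (0 < W c' * (c - eps)) by (apply Rmult_lt_0_compat; lra). lra. }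
  assert (0 <= K c * H c * (t0 - eps)).
  { apply Rmult_le_pos; [apply Rmult_le_pos|]; try lra. apply HK; lra. }
  destruct (HE t0 ltac:(lra)) as [HE1 HE2]. destruct (HE eps Heps) as [HE3 HE4].
  assert (E t0 * W t0 <= 0). { assert (0 <= E t0 * - W t0) by (apply Rmult_le_pos; lra). lra. }
  assert (0 < E eps * W eps) by (apply Rmult_lt_0_compat; lra).
  lra.
Qed.

Lemma nonneg_lim (L : R -> R) y : 0 < y -> (forall s, 0 < s < y -> L s <= L y) ->
  (forall e, 0 < e -> exists s, 0 < s < y /\ - e < L s) -> 0 <= L y.
Proof.
  intros Hy Hm Hl. destruct (Rlt_or_le (L y) 0) as [H|H]; auto.
  destruct (Hl (- L y) ltac:(lra)) as [s [Hs Hs']]. specialize (Hm s Hs). lra.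
Qed.

Lemma G_small (G : R -> R) c y : 0 < y -> G 0 = 0 -> right_deriv G 0 0 ->
  forall e, 0 < e -> exists s, 0 < s < y /\ Rabs (G s - c * s^2 / 2) < e.
Proof.
  intros Hy HG0 Hr e He. destruct (Hr 1 Rlt_0_1) as [d [Hd Hd']].
  set (s := Rmin (Rmin (y/2) (d/2)) (Rmin 1 (e / (2 * (1 + Rabs c))))).
  assert (Hc : 0 <= Rabs c) by apply Rabs_pos.
  assert (H1 : s <= y/2) by (unfold s; apply Rle_trans with (Rmin (y/2) (d/2)); [apply Rmin_l|apply Rmin_l]).
  assert (H2 : s <= d/2) by (unfold s; apply Rle_trans with (Rmin (y/2) (d/2)); [apply Rmin_l|apply Rmin_r]).
  assert (H3 : s <= 1) by (unfold s; apply Rle_trans with (Rmin 1 (e / (2 * (1 + Rabs c)))); [apply Rmin_r|apply Rmin_l]).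
  assert (H4 : s <= e / (2 * (1 + Rabs c))) by (unfold s; apply Rle_trans with (Rmin 1 (e / (2 * (1 + Rabs c)))); [apply Rmin_r|apply Rmin_r]).
  assert (Hep : 0 < e / (2 * (1 + Rabs c))) by (apply Rdiv_lt_0_compat; lra).
  assert (H0 : 0 < s).
  { unfold s. apply Rmin_glb_lt; apply Rmin_glb_lt; lra. }
  exists s. split; [lra|].
  specialize (Hd' s ltac:(lra)). rewrite Rplus_0_l, HG0, Rminus_0_r, Rminus_0_r in Hd'.
  assert (HGs : Rabs (G s) < s).
  { replace (G s) with ((G s / s) * s) by (field; lra). rewrite Rabs_mult, (Rabs_right s) by lra.
    assert (Rabs (G s / s) * s < 1 * s) by (apply Rmult_lt_compat_r; lra). lra. }
  assert (Hcs : Rabs (c * s^2/2) <= Rabs c * s / 2).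
  { unfold Rdiv. rewrite !Rabs_mult. rewrite (Rabs_right (s^2)) by (apply Rle_ge; apply pow2_ge_0).
    rewrite (Rabs_right (/2)) by lra. simpl. assert (Rabs c * (s * (s*1)) <= Rabs c * s) ; [|lra].
    apply Rmult_le_compat_l; auto. nra. }
  eapply Rle_lt_trans. { unfold Rminus. apply Rabs_triang. }
  rewrite Rabs_Ropp.
  assert (Hx : e / (2 * (1 + Rabs c)) * (2 * (1 + Rabs c)) = e) by (field; lra).
  nra.
Qed.
Lemma G_lower (G p : R -> R) c y : 0 < y -> G 0 = 0 -> right_deriv G 0 0 ->
  (forall x, 0 < x -> derivable_pt_lim G x (p x)) ->
  (forall x, 0 < x <= y -> c * x <= p x) -> c * y^2 / 2 <= G y.
Proof.
  intros Hy HG0 Hr HG Hp.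
  assert (0 <= (fun s => G s - c * s^2 * /2) y); [|simpl in *; unfold Rdiv; lra].
  apply (nonneg_lim (fun s => G s - c * s^2 * /2)); auto.
  - intros s Hs.
    destruct (MVT_cor2 (fun s => G s - c * s^2 * /2) (fun x => p x - c * x) s y ltac:(lra)) as [x [Hx1 Hx2]].
    { intros x Hx. eapply dl_ext. { apply dl_sub; [apply HG; lra|]. apply dl_mul; [apply dl_mul|apply dl_const]; [apply dl_const|apply dl_pow]. }
      simpl. field. }
    assert (c * x <= p x) by (apply Hp; lra).
    assert (0 <= (p x - c * x) * (y - s)) by (apply Rmult_le_pos; lra). lra.
  - intros e He. destruct (G_small G c y Hy HG0 Hr e He) as [s [Hs Hs']].
    exists s; split; auto. apply Rabs_def2 in Hs'. unfold Rdiv in Hs'. lra.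
Qed.
Lemma G_upper (G p : R -> R) c y : 0 < y -> G 0 = 0 -> right_deriv G 0 0 ->
  (forall x, 0 < x -> derivable_pt_lim G x (p x)) ->
  (forall x, 0 < x <= y -> p x <= c * x) -> G y <= c * y^2 / 2.
Proof.
  intros Hy HG0 Hr HG Hp.
  assert (0 <= (fun s => c * s^2 * /2 - G s) y); [|simpl in *; unfold Rdiv; lra].
  apply (nonneg_lim (fun s => c * s^2 * /2 - G s)); auto.
  - intros s Hs.
    destruct (MVT_cor2 (fun s => c * s^2 * /2 - G s) (fun x => c * x - p x) s y ltac:(lra)) as [x [Hx1 Hx2]].
    { intros x Hx. eapply dl_ext. { apply dl_sub; [|apply HG; lra]. apply dl_mul; [apply dl_mul|apply dl_const]; [apply dl_const|apply dl_pow]. }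
      simpl. field. }
    assert (p x <= c * x) by (apply Hp; lra).
    assert (0 <= (c * x - p x) * (y - s)) by (apply Rmult_le_pos; lra). lra.
  - intros e He. destruct (G_small G c y Hy HG0 Hr e He) as [s [Hs Hs']].
    exists s; split; auto. apply Rabs_def2 in Hs'. unfold Rdiv in Hs'. lra.
Qed.
Lemma near_zero n a (G p : R -> R) : 10 <= n -> 0 < a -> G 0 = 0 -> p 0 = 0 ->
  right_deriv G 0 0 -> right_deriv p 0 a ->
  (forall y, 0 < y -> derivable_pt_lim G y (p y)) ->
  exists eps, 0 < eps /\ forall y, 0 < y <= eps -> 0 < fW n G p y /\ 0 < p y.
Proof.
  intros Hn Ha HG0 Hp0 HGr Hpr HG.
  set (et := / (4 * n)).
  assert (Het : 0 < et) by (unfold et; apply Rinv_0_lt_compat; lra).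
  assert (Het2 : et * (4 * n) = 1) by (unfold et; field; lra).
  destruct (Hpr (a * et) ltac:(nra)) as [d1 [Hd1 Hd1']].
  assert (Pb : forall x, 0 < x < d1 -> a * (1 - et) * x <= p x <= a * (1 + et) * x).
  { intros x Hx. specialize (Hd1' x Hx). rewrite Rplus_0_l, Hp0, Rminus_0_r in Hd1'.
    apply Rabs_def2 in Hd1'. destruct Hd1' as [H1 H2].
    assert (Hq : p x = (p x / x) * x) by (field; lra). rewrite Hq. split; nra. }
  set (K := / ((n - 2) * a + 1)).
  assert (HK : 0 < K) by (unfold K; apply Rinv_0_lt_compat; nra).
  assert (HK2 : K * ((n - 2) * a + 1) = 1) by (unfold K; field; nra).
  set (eps := Rmin (d1/2) (Rmin 1 K)).
  assert (E1 : eps <= d1/2) by apply Rmin_l.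
  assert (E2 : eps <= 1) by (unfold eps; apply Rle_trans with (Rmin 1 K); [apply Rmin_r|apply Rmin_l]).
  assert (E3 : eps <= K) by (unfold eps; apply Rle_trans with (Rmin 1 K); [apply Rmin_r|apply Rmin_r]).
  assert (E0 : 0 < eps) by (unfold eps; apply Rmin_glb_lt; [lra| apply Rmin_glb_lt; lra]).
  exists eps; split; auto. intros y Hy.
  assert (Py := Pb y ltac:(lra)).
  assert (Gl : a * (1 - et) * y^2 / 2 <= G y).
  { apply G_lower with p; auto; try lra. intros x Hx. apply Pb; lra. }
  assert (Gu : G y <= a * (1 + et) * y^2 / 2).
  { apply G_upper with p; auto; try lra. intros x Hx. apply Pb; lra. }
  assert (Hy2 : (n - 2) * a * y^2 < 1).
  { assert (y^2 <= y * K) by (simpl; nra).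
    assert (y * K <= K) by nra.
    assert (0 < (n-2)*a) by nra.
    assert ((n - 2) * a * y^2 <= (n-2)*a*K) by nra. nra. }
  assert (Het3 : et <= 1/40) by nra.
  split; [|nra].
  unfold fW.
  set (g := G y) in *. set (q := p y) in *.
  assert (Hy2p : 0 < y^2) by (apply pow_lt; lra).
  assert (Hae : 0 < a * (1 - et)) by nra.
  assert (Hg0 : 0 <= g) by (assert (0 <= a * (1 - et) * y^2) by nra; lra).
  assert (Hq0 : 0 < q) by nra.
  assert (T1 : 0 <= y^2 * /2 * y^2 * q) by (assert (0 <= y^2 * /2 * y^2) by nra; nra).
  assert (T2 : (6 - n) * y^2 * q >= (6 - n) * y^2 * (a * (1 + et) * y)).
  { assert (0 <= ((n-6)*y^2) * (a * (1 + et) * y - q)) by (apply Rmult_le_pos; nra). nra. }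
  assert (T3 : (n - 2) * y * (g * (g - 1) * (g - 2)) >= (n-2) * y * (2 * g - 3 * g^2)).
  { assert (0 <= ((n-2)*y) * g^3) by (apply Rmult_le_pos; [nra| apply pow_le; lra]).
    assert (E: (n - 2) * y * (g * (g - 1) * (g - 2)) = (n-2) * y * (2 * g - 3 * g^2) + ((n-2)*y) * g^3) by ring. lra. }
  assert (T4 : 2 * g >= a * (1 - et) * y^2) by lra.
  assert (T5 : g^2 <= (a * (1 + et) * y^2 / 2)^2) by nra.
  assert (T6 : (n-2) * y * (2 * g - 3 * g^2) >= (n-2) * y * (a * (1 - et) * y^2 - 3 * (a * (1 + et) * y^2 / 2)^2)).
  { assert (0 <= ((n-2)*y) * ((2 * g - 3 * g^2) - (a * (1 - et) * y^2 - 3 * (a * (1 + et) * y^2 / 2)^2))) by (apply Rmult_le_pos; nra). nra. }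
  assert (T7 : 0 < y^3 * a * (4 - (2 * n - 8) * et - 3 * (n - 2) * a * y^2 * (1 + et)^2 / 4)).
  { apply Rmult_lt_0_compat; [apply Rmult_lt_0_compat; [apply pow_lt; lra| lra]|].
    assert ((2 * n - 8) * et <= 1/2) by nra.
    assert (3 * (n - 2) * a * y^2 * (1 + et)^2 / 4 <= 3 * 1 * (1+et)^2/4).
    { assert (0 <= (n-2)*a*y^2) by (assert (0 <= y^2) by nra; nra). assert (0 <= (1+et)^2) by nra. nra. }
    nra. }
  assert (E : (6 - n) * y^2 * (a * (1 + et) * y) + (n-2) * y * (a * (1 - et) * y^2 - 3 * (a * (1 + et) * y^2 / 2)^2)
     = y^3 * a * (4 - (2 * n - 8) * et - 3 * (n - 2) * a * y^2 * (1 + et)^2 / 4)) by (simpl; field).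
  nra.
Qed.
Lemma exp_pow_n x k : exp (INR k * x) = exp x ^ k.
Proof.
  induction k as [|k IH]. { simpl. rewrite Rmult_0_l, exp_0; reflexivity. }
  rewrite S_INR, Rmult_plus_distr_r, Rmult_1_l, exp_plus, IH. simpl pow. ring.
Qed.

Lemma E_pos m y : 0 < y -> 0 < fE m y.
Proof. intros Hy. unfold fE. apply Rmult_lt_0_compat; [apply pow_lt; lra | apply exp_pos]. Qed.

Lemma E_bound m y : (1 <= m)%nat -> 1 <= y -> fE m y <= (4 * INR m)^m.
Proof.
  intros Hm Hy. set (c := 4 * INR m).
  assert (Hm' : 1 <= INR m) by (replace 1 with (INR 1) by reflexivity; apply le_INR; lia).
  assert (Hc : 0 < c) by (unfold c; lra).
  assert (Hz : y / c <= exp (y^2 / c)).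
  { assert (y / c <= y^2 / c) by (unfold Rdiv; apply Rmult_le_compat_r; [left; apply Rinv_0_lt_compat; lra| simpl; nra]).
    assert (1 + y^2/c <= exp (y^2/c)) by apply exp_ineq1_le. lra. }
  assert (Hex : exp (y^2 * / 4) = exp (y^2 / c) ^ m).
  { rewrite <- exp_pow_n. f_equal. unfold c. field. lra. }
  assert (Hp : (y / c)^m <= exp (y^2/c) ^ m) by (apply pow_incr; split; [apply Rlt_le, Rdiv_lt_0_compat; lra | auto]).
  unfold fE. rewrite exp_Ropp, <- Hex in *.
  assert (Hy' : y ^ m = c ^ m * (y / c) ^ m) by (rewrite <- Rpow_mult_distr; f_equal; field; lra).
  rewrite Hy'. rewrite Hex.
  assert (0 < exp (y^2/c) ^ m) by (apply pow_lt, exp_pos).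
  assert (0 < c ^ m) by (apply pow_lt; lra).
  apply Rle_trans with (c ^ m * (exp (y ^ 2 / c) ^ m) * / exp (y ^ 2 / c) ^ m).
  { apply Rmult_le_compat_r; [left; apply Rinv_0_lt_compat; lra|]. apply Rmult_le_compat_l; lra. }
  right. field. lra.
Qed.
Theorem mainTheorem6 (d : nat) (a : R) (g : R -> R) (D : nat -> R -> R) :
  (10 <= d)%nat ->
  smooth_on_nonneg g D ->
  (forall y : R, 0 < y ->
     D 2%nat y + ((INR d - 3) / y - y / 2) * D 1%nat y
       - (INR d - 2) / (y ^ 2) * (g y * (g y - 1) * (g y - 2)) = 0) ->
  g 0 = 0 -> D 1%nat 0 = 0 -> D 2%nat 0 = a -> 0 < a ->
  let h := fun y : R => y ^ 3 * D 1%nat y in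
  (forall y : R, 0 < y -> exists l : R, derivable_pt_lim h y l /\ 0 < l) /\
  (forall M : R, exists Y : R, forall y : R, Y < y -> M < h y).
Proof.
  intros Hd [S0 [S1 S2]] Hode Hg0 Hp0 Hq0 Ha h.
  set (n := INR d).
  assert (Hn : 10 <= n) by (unfold n; replace 10 with (INR 10) by (simpl; ring); apply le_INR; auto).
  set (G := D 0%nat). set (p := D 1%nat). set (q := D 2%nat).
  assert (HG : forall y, 0 < y -> derivable_pt_lim G y (p y)) by (intros; apply S1; auto).
  assert (Hp : forall y, 0 < y -> derivable_pt_lim p y (q y)) by (intros; apply S1; auto).
  assert (Hode' : forall y, 0 < y -> q y + ((n-3)/y - y/2)*p y - (n-2)/y^2 * (G y*(G y-1)*(G y-2)) = 0).
  { intros y Hy. unfold G; rewrite S0 by lra. apply Hode; auto. }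
  assert (HG0 : G 0 = 0) by (unfold G; rewrite S0 by lra; auto).
  assert (HGr : right_deriv G 0 0) by (pose proof (S2 0%nat) as X; rewrite Hp0 in X; exact X).
  assert (Hpr : right_deriv p 0 a) by (pose proof (S2 1%nat) as X; rewrite Hq0 in X; exact X).
  destruct (near_zero n a G p Hn Ha HG0 Hp0 HGr Hpr HG) as [eps [Heps Hnz]].
  set (m := (d - 7)%nat).
  assert (Hm : INR m = n - 7) by (unfold m, n; rewrite minus_INR by lia; simpl; ring).
  assert (Hm1 : (1 <= m)%nat) by (unfold m; lia).
  assert (HF : forall y, 0 < y -> derivable_pt_lim (fF n m G p) y (fE m y * fC n G y * fH p y)).
  { intros y Hy. apply F_deriv with q; auto. }
  assert (HC : forall y, 0 < y -> 0 <= fC n G y).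
  { intros y Hy. unfold fC. apply Rmult_le_pos; [| left; apply Rinv_0_lt_compat; apply pow_lt; lra].
    assert (E : 2 * n - 12 + (n - 2) * (3 * G y ^ 2 - 6 * G y + 2) = n - 10 + 3 * (n-2) * (G y - 1)^2) by ring.
    rewrite E. assert (0 <= (n-2) * (G y - 1)^2) by (apply Rmult_le_pos; [lra| apply pow2_ge_0]). lra. }
  assert (HK : forall y, 0 < y -> 0 <= fE m y * fC n G y).
  { intros y Hy. apply Rmult_le_pos; [left; apply E_pos; auto | apply HC; auto]. }
  assert (HH : forall y, 0 < y -> derivable_pt_lim (fH p) y (fW n G p y)).
  { intros y Hy. apply H_deriv with q; auto. }
  assert (HWc : forall y, 0 < y -> continuity_pt (fW n G p) y).
  { intros y Hy. eapply dl_cont. apply W_deriv with q; auto. }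
  assert (HE : forall y, 0 < y -> fF n m G p y = fE m y * fW n G p y /\ 0 < fE m y).
  { intros y Hy. split; [reflexivity| apply E_pos; auto]. }
  assert (HWe : 0 < fW n G p eps) by (apply Hnz; lra).
  assert (HHe : 0 < fH p eps).
  { unfold fH. apply Rmult_lt_0_compat; [apply pow_lt; lra| apply Hnz; lra]. }
  assert (HWpos : forall z, 0 < z -> 0 < fW n G p z).
  { intros z Hz. destruct (Rle_or_lt z eps).
    - apply Hnz; lra.
    - apply (propagate (fW n G p) (fH p) (fF n m G p) (fE m) (fun y => fE m y * fC n G y) eps); auto; lra. }
  split.
  { intros y Hy. exists (fW n G p y). split; [apply HH|apply HWpos]; auto. }
  assert (HHpos : forall y, 0 < y -> 0 < fH p y).
  { intros y Hy. destruct (Rle_or_lt y eps).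
    - unfold fH. apply Rmult_lt_0_compat; [apply pow_lt; lra| apply Hnz; lra].
    - destruct (MVT_cor2 (fH p) (fW n G p) eps y H) as [c [Hc1 Hc2]].
      { intros c Hc. apply HH; lra. }
      assert (0 < fW n G p c * (y - eps)) by (apply Rmult_lt_0_compat; [apply HWpos|]; lra). lra. }
  assert (HF1 : forall y, 1 <= y -> fF n m G p 1 <= fF n m G p y).
  { intros y Hy. destruct Hy as [Hy|<-]; [|lra].
    destruct (MVT_cor2 (fF n m G p) (fun y => fE m y * fC n G y * fH p y) 1 y Hy) as [c [Hc1 Hc2]].
    { intros c Hc. apply HF; lra. }
    assert (0 <= fE m c * fC n G c * fH p c * (y - 1)).
    { apply Rmult_le_pos; [apply Rmult_le_pos; [apply HK; lra| left; apply HHpos; lra]| lra]. }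
    lra. }
  set (Em := (4 * INR m) ^ m).
  assert (HEm : 0 < Em) by (unfold Em; apply pow_lt; assert (1 <= INR m) by (replace 1 with (INR 1) by reflexivity; apply le_INR; lia); lra).
  assert (HF1p : 0 < fF n m G p 1).
  { unfold fF. apply Rmult_lt_0_compat; [apply E_pos| apply HWpos]; lra. }
  set (c := fF n m G p 1 / Em).
  assert (Hc : 0 < c) by (unfold c; apply Rdiv_lt_0_compat; auto).
  assert (HWc1 : forall y, 1 <= y -> c <= fW n G p y).
  { intros y Hy. assert (HEy := E_pos m y ltac:(lra)). assert (HEb := E_bound m y Hm1 Hy).
    assert (HFy := HF1 y Hy). unfold fF in HFy.
    assert (HW : 0 < fW n G p y) by (apply HWpos; lra).
    unfold c. apply Rle_trans with (fE m y * fW n G p y / Em).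
    { unfold Rdiv. apply Rmult_le_compat_r; [left; apply Rinv_0_lt_compat; auto| exact HFy]. }
    apply Rmult_le_reg_r with Em; auto. unfold Rdiv. rewrite Rmult_assoc, Rinv_l by lra.
    rewrite Rmult_1_r, (Rmult_comm (fE m y)). apply Rmult_le_compat_l; unfold Em; lra. }
  intros M. exists (1 + Rabs (M - fH p 1) / c). intros y Hy.
  assert (Hr : 0 <= Rabs (M - fH p 1) / c) by (unfold Rdiv; apply Rmult_le_pos; [apply Rabs_pos| left; apply Rinv_0_lt_compat; auto]).
  destruct (MVT_cor2 (fH p) (fW n G p) 1 y ltac:(lra)) as [c1 [Hc1 Hc2]].
  { intros c0 Hc0. apply HH; lra. }
  assert (Hw : c <= fW n G p c1) by (apply HWc1; lra).
  assert (c * (y - 1) <= fW n G p c1 * (y - 1)) by (apply Rmult_le_compat_r; lra).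
  assert (Rabs (M - fH p 1) < c * (y - 1)).
  { replace (Rabs (M - fH p 1)) with (c * (Rabs (M - fH p 1) / c)) by (field; lra).
    apply Rmult_lt_compat_l; lra. }
  assert (M - fH p 1 <= Rabs (M - fH p 1)) by apply RRle_abs.
  change (M < fH p y). lra.
Qed.
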